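(* There are absolute constants $C,c_1,c_2>0$ such that the following holds. Let $k\ge1$ be an integer and let $f\in\ell^2(V,w)$ be nonnegative with $\mathrm{vol}(\mathrm{supp}(f))\le\mathrm{vol}(V)/2$ and $\mathcal R(f)>0$, and set $\delta=\phi(f)^2/\mathcal R(f)$. Then at least one of the following holds: (i) $\phi(f)\le Ck\,\mathcal R(f)$; (ii) there exist $k$ disjointly supported nonzero functions $f_1,\dots,f_k\in\ell^2(V,w)$ such that for all $i$, $\mathrm{supp}(f_i)\subseteq\mathrm{supp}(f)$ and $\mathcal R(f_i)\le Ck^2\,\mathcal R(f)/\delta$; moreover, for each $i$ there are reals $0<a_i<b_i$ with $c_1a_i/k\le b_i-a_i\le c_2a_i/k$ such that $\mathrm{supp}(f_i)\subseteq\{v: a_i\le f(v)\le b_i\}$.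
   Context: $G=(V,E,w)$ finite undirected, positive edge weights, $w(v)=\sum_{u\sim v}w(u,v)\ge1$, $\mathrm{vol}(S)=\sum_{v\in S}w(v)$, $\mathrm{supp}(f)=\{v:f(v)\ne0\}$. $\|f\|_w^2=\sum_vw(v)f(v)^2$, $\mathcal R(f)=\sum_{\{u,v\}\in E}w(u,v)(f(u)-f(v))^2/\|f\|_w^2$. Conductance $\phi(S)=w(E(S,\overline S))/\min\{\mathrm{vol}(S),\mathrm{vol}(\overline S)\}$; $V_f(t)=\{v:f(v)\ge t\}$; $\phi(f)=\min\{\phi(V_f(t)):\emptyset\ne V_f(t)\ne V\}$. Functions are disjointly supported if their supports are pairwise disjoint. *)

(* Defs.v *)
From HB Require Import structures.
From Stdlib Require Import Reals.
From mathcomp Require Import all_boot.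
Set Implicit Arguments. Unset Strict Implicit. Unset Printing Implicit Defensive.

Open Scope R_scope.

Lemma Rplus_assoc' : associative Rplus.
Proof. intros x y z; symmetry; apply Rplus_assoc. Qed.
Lemma Rplus_comm' : commutative Rplus.
Proof. intros x y; apply Rplus_comm. Qed.
Lemma Rplus_0_l' : left_id (IZR 0) Rplus.
Proof. intros x; apply Rplus_0_l. Qed.
HB.instance Definition _ :=
  Monoid.isComLaw.Build R (IZR 0) Rplus Rplus_assoc' Rplus_comm' Rplus_0_l'.

Definition sumR (V : finType) (P : pred V) (F : V -> R) : R :=
  \big[Rplus/0]_(v : V | P v) F v.

Definition Rneqb (x y : R) : bool := if Req_EM_T x y then false else true.
Definition Rleb (x y : R) : bool := if Rle_dec x y then true else false.

(* A weighted graph on the finite vertex set V, given by a symmetric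
   nonnegative weight function w with no self-loops; {u,v} is an edge iff
   w u v > 0 (so edge weights are positive). *)
Definition weighted_graph (V : finType) (w : V -> V -> R) : Prop :=
  (forall u v, w u v = w v u) /\ (forall u v, 0 <= w u v) /\
  (forall v, w v v = 0).

Definition deg (V : finType) (w : V -> V -> R) (v : V) : R :=
  sumR predT (fun u => w u v).

Definition vol (V : finType) (w : V -> V -> R) (S : pred V) : R :=
  sumR S (deg w).

Definition supp (V : finType) (f : V -> R) : pred V := fun v => Rneqb (f v) 0.

Definition normw2 (V : finType) (w : V -> V -> R) (f : V -> R) : R :=
  sumR predT (fun v => deg w v * (f v) ^ 2).

(* sum over edges {u,v} of w(u,v)(f(u)-f(v))^2; each unordered edge appears
   twice in the ordered double sum and there are no loops. *)
Definition edge_energy (V : finType) (w : V -> V -> R) (f : V -> R) : R :=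
  / 2 * sumR predT (fun u => sumR predT (fun v => w u v * (f u - f v) ^ 2)).

Definition rayleigh (V : finType) (w : V -> V -> R) (f : V -> R) : R :=
  edge_energy w f / normw2 w f.

Definition cut (V : finType) (w : V -> V -> R) (S : pred V) : R :=
  sumR S (fun u => sumR (predC S) (fun v => w u v)).

Definition conductance (V : finType) (w : V -> V -> R) (S : pred V) : R :=
  cut w S / Rmin (vol w S) (vol w (predC S)).

Definition level_set (V : finType) (f : V -> R) (t : R) : pred V :=
  fun v => Rleb t (f v).

Definition nontrivial (V : finType) (S : pred V) : Prop :=
  (exists v, S v) /\ (exists v, ~~ S v).

Definition is_phi_f (V : finType) (w : V -> V -> R) (f : V -> R) (x : R) : Prop :=
  (exists t, nontrivial (level_set f t) /\ x = conductance w (level_set f t)) /\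
  (forall t, nontrivial (level_set f t) -> x <= conductance w (level_set f t)).

(* Main.v *)
Require Import Defs.
From HB Require Import structures.
From Stdlib Require Import Reals Lra Psatz FunctionalExtensionality Classical.
From mathcomp Require Import all_boot.
From mathcomp Require Import zify.
Open Scope R_scope.
Set Implicit Arguments. Unset Strict Implicit.


Lemma bigR_le (I : Type) (r : seq I) (P : pred I) (F G : I -> R) :
  (forall i, P i -> F i <= G i) ->
  \big[Rplus/0]_(i <- r | P i) F i <= \big[Rplus/0]_(i <- r | P i) G i.
Proof.
move=> H; apply: (big_ind2 (fun x y => x <= y)) => //; [lra | intros; lra].
Qed.

Lemma bigR_ge0 (I : Type) (r : seq I) (P : pred I) (F : I -> R) :
  (forall i, P i -> 0 <= F i) -> 0 <= \big[Rplus/0]_(i <- r | P i) F i.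
Proof.
move=> H; apply: (big_ind (fun x => 0 <= x)) => //; [lra | intros; lra].
Qed.

Lemma bigR_scal (I : Type) (r : seq I) (P : pred I) (F : I -> R) c :
  c * \big[Rplus/0]_(i <- r | P i) F i = \big[Rplus/0]_(i <- r | P i) (c * F i).
Proof.
apply: (big_ind2 (fun x y => c * x = y)) => //; [lra | intros; subst; lra].
Qed.

Lemma bigR_abs (I : Type) (r : seq I) (P : pred I) (F : I -> R) :
  Rabs (\big[Rplus/0]_(i <- r | P i) F i) <= \big[Rplus/0]_(i <- r | P i) Rabs (F i).
Proof.
apply: (big_ind2 (fun x y => Rabs x <= y)) => //.
- rewrite Rabs_R0; lra.
- intros. eapply Rle_trans; [apply Rabs_triang|lra].
- intros; lra.
Qed.

Lemma bigR_add (I : Type) (r : seq I) (P : pred I) (F G : I -> R) :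
  \big[Rplus/0]_(i <- r | P i) (F i + G i) =
  \big[Rplus/0]_(i <- r | P i) F i + \big[Rplus/0]_(i <- r | P i) G i.
Proof. by rewrite big_split. Qed.

Lemma bigR_exch (V : finType) (P Q : pred V) (F : V -> V -> R) :
  \big[Rplus/0]_(u | P u) \big[Rplus/0]_(v | Q v) F u v =
  \big[Rplus/0]_(v | Q v) \big[Rplus/0]_(u | P u) F u v.
Proof. by rewrite exchange_big. Qed.


Lemma RneqbP x y : Rneqb x y = true <-> x <> y.
Proof. rewrite /Rneqb; case: Req_EM_T => H; split => //; congruence. Qed.
Lemma RneqbF x y : Rneqb x y = false <-> x = y.
Proof. rewrite /Rneqb; case: Req_EM_T => H; split => //. Qed.
Lemma RlebP x y : Rleb x y = true <-> x <= y.
Proof. rewrite /Rleb; case: Rle_dec => H; split => //. Qed.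

Lemma sumR_cond (V : finType) (P : pred V) F :
  sumR P F = sumR predT (fun v => if P v then F v else 0).
Proof. by rewrite /sumR big_mkcond. Qed.

Lemma sumR_le (V : finType) (P : pred V) F G :
  (forall v, P v -> F v <= G v) -> sumR P F <= sumR P G.
Proof. move=> H; by apply: bigR_le. Qed.

Lemma sumR_ge0 (V : finType) (P : pred V) F :
  (forall v, P v -> 0 <= F v) -> 0 <= sumR P F.
Proof. move=> H; by apply: bigR_ge0. Qed.

Lemma sumR_ext (V : finType) (P : pred V) F G :
  (forall v, F v = G v) -> sumR P F = sumR P G.
Proof. move=> H; rewrite /sumR; apply: eq_bigr => i _; apply H. Qed.

Lemma sumR_add (V : finType) (P : pred V) F G :
  sumR P (fun v => F v + G v) = sumR P F + sumR P G.
Proof. by rewrite /sumR bigR_add. Qed.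

Lemma sumR_scal (V : finType) (P : pred V) F c :
  c * sumR P F = sumR P (fun v => c * F v).
Proof. by rewrite /sumR bigR_scal. Qed.

Lemma sumR_term (V : finType) (P : pred V) F v :
  P v -> (forall u, P u -> 0 <= F u) -> F v <= sumR P F.
Proof.
move=> Pv H; rewrite /sumR (bigD1 v) //=.
have : 0 <= \big[Rplus/0]_(i | P i && (i != v)) F i.
  apply: bigR_ge0 => i /andP [Pi _]; exact: H.
lra.
Qed.

Lemma sumR_zero (V : finType) (P : pred V) F :
  (forall v, P v -> F v = 0) -> sumR P F = 0.
Proof. move=> H; rewrite /sumR; apply: big1 => i; exact: H. Qed.

Lemma exists_min_seq (V : eqType) (P : pred V) (g : V -> R) (s : seq V) :
  has P s -> exists v0, P v0 /\ forall v, v \in s -> P v -> g v0 <= g v.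
Proof.
elim: s => //= a s IH /orP [Pa|Hs].
- case Hs: (has P s).
  + case: (IH Hs) => v0 [Pv0 Hv0].
    case: (Rle_dec (g a) (g v0)) => Hle.
    * exists a; split => // v; rewrite in_cons => /orP [/eqP ->|vs] Pv; [lra|].
      move: (Hv0 v vs Pv); lra.
    * exists v0; split => // v; rewrite in_cons => /orP [/eqP ->|vs] Pv; [lra|].
      exact: Hv0.
  + exists a; split => // v; rewrite in_cons => /orP [/eqP ->|vs] Pv; [lra|].
    by move/hasPn: Hs => /(_ v vs); rewrite Pv.
- case: (IH Hs) => v0 [Pv0 Hv0].
  case: (Rle_dec (g a) (g v0)) => Hle.
  + case Pa: (P a).
    * exists a; split => // v; rewrite in_cons => /orP [/eqP ->|vs] Pv; [lra|].
      move: (Hv0 v vs Pv); lra.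
    * exists v0; split => // v; rewrite in_cons => /orP [/eqP ->|vs] Pv;
        [by rewrite Pv in Pa|exact: Hv0].
  + exists v0; split => // v; rewrite in_cons => /orP [/eqP ->|vs] Pv; [lra|].
    exact: Hv0.
Qed.

Lemma exists_min (V : finType) (P : pred V) (g : V -> R) :
  (exists v, P v) -> exists v0, P v0 /\ forall v, P v -> g v0 <= g v.
Proof.
move=> [v Pv].
have Hh : has P (enum V) by apply/hasP; exists v => //; rewrite mem_enum.
case: (@exists_min_seq _ P g _ Hh) => v0 [Pv0 H]; exists v0; split => // u Pu.
apply: H => //; by rewrite mem_enum.
Qed.

Lemma exists_max (V : finType) (P : pred V) (g : V -> R) :
  (exists v, P v) -> exists v0, P v0 /\ forall v, P v -> g v <= g v0.
Proof.
move=> H; case: (@exists_min V P (fun v => - g v) H) => v0 [Pv0 H0].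
exists v0; split => // v Pv; move: (H0 v Pv); lra.
Qed.


Lemma vol_mono (V : finType) (w : V -> V -> R) (P Q : pred V) :
  (forall v, 0 <= deg w v) -> (forall v, P v -> Q v) -> vol w P <= vol w Q.
Proof.
move=> Hd H; rewrite /vol (sumR_cond P) (sumR_cond Q); apply: sumR_le => v _.
case Pv: (P v); first by rewrite (H v Pv); lra.
case: (Q v); [apply Hd|lra].
Qed.

Lemma vol_compl (V : finType) (w : V -> V -> R) (P : pred V) :
  vol w (predC P) = vol w predT - vol w P.
Proof.
have: vol w predT = vol w P + vol w (predC P).
  rewrite /vol (sumR_cond P) (sumR_cond (predC P)) -sumR_add.
  apply: sumR_ext => v /=; case: (P v) => /=; lra.
lra.
Qed.

Lemma deg_ge0 (V : finType) (w : V -> V -> R) : weighted_graph w -> forall v, 0 <= deg w v.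
Proof. move=> [_ [Hp _]] v; rewrite /deg; apply: sumR_ge0 => u _; apply Hp. Qed.

Lemma supp_not_all (V : finType) (w : V -> V -> R) (f : V -> R) :
  weighted_graph w -> (forall v, 1 <= deg w v) ->
  vol w (supp f) <= vol w predT / 2 -> forall v0 : V, exists v, f v = 0.
Proof.
move=> Hw Hd Hvol v0.
case: (classic (exists v, f v = 0)) => // Hn; exfalso.
have Hall : forall v, supp f v by move=> v; apply/RneqbP => H; apply Hn; exists v.
have : vol w (supp f) = vol w predT.
  rewrite /vol /sumR; apply: eq_bigl => v; by rewrite Hall.
have : deg w v0 <= vol w predT.
  by apply: sumR_term => // u _; apply: deg_ge0.
move: (Hd v0); lra.
Qed.

Lemma level_cut (V : finType) (w : V -> V -> R) (f : V -> R) (phi : R) :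
  weighted_graph w -> (forall v, 1 <= deg w v) ->
  vol w (supp f) <= vol w predT / 2 ->
  (forall t, nontrivial (level_set f t) -> phi <= conductance w (level_set f t)) ->
  forall t, (exists v, level_set f t v) -> (forall v, level_set f t v -> f v <> 0) ->
  phi * vol w (level_set f t) <= cut w (level_set f t).
Proof.
move=> Hw Hd Hvol Hphi t [v1 Hv1] Hsub.
set S := level_set f t.
have [v0 Hv0] := supp_not_all Hw Hd Hvol v1.
have Hnt : nontrivial S.
  split; first by exists v1.
  exists v0; apply/negP => H; exact: (Hsub v0 H Hv0).
have HS : vol w S <= vol w (supp f).
  apply: vol_mono; first exact: deg_ge0.
  move=> v Hv; apply/RneqbP; exact: Hsub.
have HS1 : deg w v1 <= vol w S.
  by apply: sumR_term => // u _; apply: deg_ge0.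
move: (Hd v1) => Hd1.
have Hmin : Rmin (vol w S) (vol w (predC S)) = vol w S.
  rewrite vol_compl; apply Rmin_left; lra.
move: (Hphi t Hnt); rewrite /conductance -/S Hmin => H.
have Hpos : 0 < vol w S by lra.
apply (Rmult_le_reg_r (/ vol w S)); first by apply Rinv_0_lt_compat.
rewrite Rmult_assoc Rinv_r; lra.
Qed.

Definition ind (V : finType) (P : pred V) (v : V) : R := if P v then 1 else 0.

Lemma ind_pairs (V : finType) (w : V -> V -> R) (P : pred V) :
  weighted_graph w ->
  sumR predT (fun u => sumR predT (fun v => w u v * Rabs (ind P u - ind P v)))
  = 2 * cut w P.
Proof.
move=> [Hs _].
have E1 : forall u, sumR predT (fun v => w u v * Rabs (ind P u - ind P v)) =
   if P u then sumR (predC P) (fun v => w u v) else sumR P (fun v => w u v).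
  move=> u; rewrite /ind; case Pu: (P u).
  - rewrite (sumR_cond (predC P)); apply: sumR_ext => v /=; case: (P v) => /=;
    [rewrite Rminus_diag Rabs_R0|rewrite Rminus_0_r Rabs_R1]; lra.
  - rewrite (sumR_cond P); apply: sumR_ext => v /=; case: (P v) => /=;
    [rewrite Rminus_0_l Rabs_Ropp Rabs_R1|rewrite Rminus_diag Rabs_R0]; lra.
rewrite (sumR_ext _ E1).
have -> : sumR predT (fun u => if P u then sumR (predC P) (fun v => w u v) else sumR P (fun v => w u v))
  = sumR predT (fun u => if P u then sumR (predC P) (fun v => w u v) else 0)
  + sumR predT (fun u => if predC P u then sumR P (fun v => w u v) else 0).
  rewrite -sumR_add; apply: sumR_ext => u /=; case: (P u) => /=; lra.
rewrite -!sumR_cond /cut.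
have -> : sumR (predC P) (fun u => sumR P (fun v => w u v)) =
          sumR P (fun u => sumR (predC P) (fun v => w u v)).
  rewrite /sumR bigR_exch; apply: eq_bigr => u _; apply: eq_bigr => v _; apply Hs.
lra.
Qed.


Lemma coarea (V : finType) (w : V -> V -> R) (f : V -> R) (phi : R) :
  weighted_graph w -> (forall v, 1 <= deg w v) -> (forall v, 0 <= f v) ->
  vol w (supp f) <= vol w predT / 2 ->
  (forall t, nontrivial (level_set f t) -> phi <= conductance w (level_set f t)) ->
  forall h : V -> R, (forall v, 0 <= h v) -> (forall u v, f u <= f v -> h u <= h v) ->
  (forall v, h v <> 0 -> f v <> 0) ->
  2 * phi * sumR predT (fun v => deg w v * h v) <=
  sumR predT (fun u => sumR predT (fun v => w u v * Rabs (h u - h v))).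
Proof.
move=> Hw Hd Hf0 Hvol Hphi.
have Hwp : forall u v, 0 <= w u v by case: Hw => _ [].
suff: forall n (h : V -> R), (#|[pred v | Rneqb (h v) 0]| <= n)%N ->
  (forall v, 0 <= h v) -> (forall u v, f u <= f v -> h u <= h v) ->
  (forall v, h v <> 0 -> f v <> 0) ->
  2 * phi * sumR predT (fun v => deg w v * h v) <=
  sumR predT (fun u => sumR predT (fun v => w u v * Rabs (h u - h v))).
  by move=> H h; apply: (H #|[pred v | Rneqb (h v) 0]|).
elim=> [|n IH] h Hcard Hh0 Hmon Hsupp.
- have Hz : forall v, h v = 0.
    move=> v; apply/RneqbF; apply/negbTE/negP => Hv.
    move: Hcard; rewrite leqn0 => /eqP /card0_eq /(_ v); by rewrite inE Hv.
  rewrite (@sumR_zero V predT (fun v => deg w v * h v)); last by move=> v _; rewrite Hz; lra.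
  have : 0 <= sumR predT (fun u => sumR predT (fun v => w u v * Rabs (h u - h v))).
    apply: sumR_ge0 => u _; apply: sumR_ge0 => v _.
    apply: Rmult_le_pos; [apply Hwp|apply Rabs_pos].
  lra.
- set P : pred V := fun v => Rneqb (h v) 0.
  case: (classic (exists v, P v)) => [Hex|Hnex]; last first.
  + have Hz : forall v, h v = 0.
      move=> v; apply/RneqbF; apply/negbTE/negP => Hv; apply Hnex; by exists v.
    rewrite (@sumR_zero V predT (fun v => deg w v * h v)); last by move=> v _; rewrite Hz; lra.
    have : 0 <= sumR predT (fun u => sumR predT (fun v => w u v * Rabs (h u - h v))).
      apply: sumR_ge0 => u _; apply: sumR_ge0 => v _.
      apply: Rmult_le_pos; [apply Hwp|apply Rabs_pos].
    lra.
  have [v1 [Pv1 Hv1]] := exists_min f Hex.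
  have hv1 : h v1 <> 0 by apply/RneqbP.
  set s := h v1.
  have spos : 0 < s by move: (Hh0 v1); rewrite /s; lra.
  have HPge : forall v, P v -> s <= h v by move=> v Pv; apply: Hmon; apply: Hv1.
  have HPeq : P = level_set f (f v1).
    apply: functional_extensionality => v; rewrite /level_set.
    case Pv: (P v).
    + by symmetry; apply/RlebP; apply: Hv1.
    + symmetry; apply/negbTE/negP => /RlebP Hle.
      have := Hmon _ _ Hle; rewrite -/s => H.
      have : h v <> 0 by lra.
      by move/RneqbP; rewrite -/(P v) Pv.
  set h' := fun v => if P v then h v - s else 0.
  have Hdec : forall v, h v = h' v + s * ind P v.
    move=> v; rewrite /h' /ind; case Pv: (P v); first lra.
    have := Pv; rewrite /P => /RneqbF ->; lra.
  have Hdec2 : forall u v, Rabs (h u - h v) = Rabs (h' u - h' v) + s * Rabs (ind P u - ind P v).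
    move=> u v; rewrite /h' /ind; have := HPge u; have := HPge v.
    case Pu: (P u); case Pv: (P v) => Hv Hu.
    - rewrite Rminus_diag Rabs_R0; have -> : h u - s - (h v - s) = h u - h v by ring. lra.
    - have := Pv; rewrite /P => /RneqbF ->.
      have Hu' := Hu isT.
      rewrite /Rabs; repeat (case: Rcase_abs => ?); lra.
    - have := Pu; rewrite /P => /RneqbF ->.
      have Hv' := Hv isT.
      rewrite /Rabs; repeat (case: Rcase_abs => ?); lra.
    - have := Pu; rewrite /P => /RneqbF ->.
      have := Pv; rewrite /P => /RneqbF ->.
      rewrite Rminus_diag Rabs_R0; lra.
  have IHh : 2 * phi * sumR predT (fun v => deg w v * h' v) <=
      sumR predT (fun u => sumR predT (fun v => w u v * Rabs (h' u - h' v))).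
    apply: IH.
    - rewrite -ltnS; apply: leq_trans Hcard; apply: proper_card; apply/properP; split.
      + apply/subsetP => v; rewrite !inE /h'; case Pv: (P v) => H; first exact: Pv.
        by move: H => /RneqbP.
      + exists v1; first by rewrite inE.
        rewrite inE /h' Pv1 -/s Rminus_diag; apply/negP => /RneqbP; apply; reflexivity.
    - move=> v; rewrite /h'; case Pv: (P v); last lra.
      move: (HPge v Pv); lra.
    - move=> u v Huv; rewrite /h'; case Pu: (P u); case Pv: (P v).
      + move: (Hmon _ _ Huv); lra.
      + exfalso; have Hu' : h u <> 0 by apply/RneqbP.
        have := Hmon _ _ Huv; have := Hh0 u; move=> H1 H2.
        have : h v <> 0 by move: (HPge u Pu); lra.
        by move/RneqbP; rewrite -/(P v) Pv.
      + move: (HPge v Pv); lra.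
      + lra.
    - move=> v; rewrite /h'; case Pv: (P v); last lra.
      move=> _; apply Hsupp; by apply/RneqbP.
  have Hcut : phi * vol w P <= cut w P.
    rewrite HPeq; apply: (level_cut Hw Hd Hvol Hphi).
    + exists v1; by rewrite -HPeq.
    + move=> v; rewrite -HPeq => Pv; apply Hsupp; by apply/RneqbP.
  have EL : sumR predT (fun v => deg w v * h v) =
      sumR predT (fun v => deg w v * h' v) + s * vol w P.
    rewrite /vol (@sumR_cond _ P) sumR_scal -sumR_add; apply: sumR_ext => v.
    rewrite Hdec /ind; case: (P v); ring.
  have ER : sumR predT (fun u => sumR predT (fun v => w u v * Rabs (h u - h v))) =
      sumR predT (fun u => sumR predT (fun v => w u v * Rabs (h' u - h' v)))
      + s * (2 * cut w P).
    rewrite -(ind_pairs P Hw) sumR_scal -sumR_add; apply: sumR_ext => u.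
    rewrite sumR_scal -sumR_add; apply: sumR_ext => v.
    rewrite Hdec2; ring.
  rewrite EL ER.
  have : s * (phi * vol w P) <= s * cut w P by apply: Rmult_le_compat_l; lra.
  lra.
Qed.


Definition hw (L : R) (k : nat) (i : nat) : R := L * 2 ^ (i %/ k)%N / INR k.
Definition pt (L : R) (k : nat) (j : nat) : R :=
  L + \big[Rplus/0]_(0 <= i < j) hw L k i.

Lemma pt_S L k j : pt L k j.+1 = pt L k j + hw L k j.
Proof. rewrite /pt big_nat_recr //=; lra. Qed.

Lemma pt_0 L k : pt L k 0 = L.
Proof. rewrite /pt big_geq //; lra. Qed.

Lemma hw_pos L k i : 0 < L -> (0 < k)%N -> 0 < hw L k i.
Proof.
move=> HL Hk; rewrite /hw; apply: Rdiv_lt_0_compat.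
- apply: Rmult_lt_0_compat => //; apply: pow_lt; lra.
- apply: lt_0_INR; apply/ltP; exact Hk.
Qed.

Lemma pt_mono L k i j : 0 < L -> (0 < k)%N -> (i <= j)%N -> pt L k i <= pt L k j.
Proof.
move=> HL Hk; elim: j => [|j IH]; first by rewrite leqn0 => /eqP ->; lra.
rewrite leq_eqVlt => /orP [/eqP ->|Hij]; first lra.
rewrite pt_S; have := IH Hij; have := hw_pos j HL Hk; lra.
Qed.

Lemma pt_lt L k i j : 0 < L -> (0 < k)%N -> (i < j)%N -> pt L k i.+1 <= pt L k j.
Proof. move=> HL Hk Hij; exact: pt_mono. Qed.

Lemma pt_formula L k m t : 0 < L -> (0 < k)%N -> (t <= k)%N ->
  pt L k (m * k + t)%N = L * 2 ^ m * (1 + INR t / INR k).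
Proof.
move=> HL Hk.
have Hk' : 0 < INR k by apply: lt_0_INR; apply/ltP.
elim: m t => [|m IHm] t.
- elim: t => [|t IHt] Ht.
  + rewrite mul0n addn0 pt_0 /=; field; lra.
  + rewrite mul0n add0n pt_S.
    have := IHt (ltnW Ht); rewrite mul0n add0n => ->.
    rewrite /hw divn_small // S_INR /=; field; lra.
- elim: t => [|t IHt] Ht.
  + rewrite addn0.
    have -> : ((m.+1) * k = m * k + k)%N by rewrite mulSn addnC.
    rewrite IHm // /=; field; lra.
  + rewrite addnS pt_S.
    have := IHt (ltnW Ht) => ->.
    rewrite /hw divnMDl // divn_small // addn0 S_INR /=; field; lra.
Qed.

Lemma pt_gen L k j : 0 < L -> (0 < k)%N ->
  pt L k j = L * 2 ^ (j %/ k)%N * (1 + INR (j %% k)%N / INR k).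
Proof.
move=> HL Hk; rewrite {1}(divn_eq j k) pt_formula //; apply: ltnW; exact: ltn_pmod.
Qed.

Lemma pt_bounds L k j : 0 < L -> (0 < k)%N ->
  L * 2 ^ (j %/ k)%N <= pt L k j <= 2 * (L * 2 ^ (j %/ k)%N).
Proof.
move=> HL Hk; rewrite pt_gen //.
have Hk' : 0 < INR k by apply: lt_0_INR; apply/ltP.
have Ht : INR (j %% k)%N <= INR k by apply: le_INR; apply/leP; apply: ltnW; exact: ltn_pmod.
have Hp : 0 < L * 2 ^ (j %/ k)%N by apply: Rmult_lt_0_compat => //; apply: pow_lt; lra.
have H0 : 0 <= INR (j %% k)%N / INR k by apply: Rmult_le_pos; [apply: pos_INR|apply: Rlt_le; apply: Rinv_0_lt_compat; lra].
have H1 : INR (j %% k)%N / INR k <= 1.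
  apply (Rmult_le_reg_r (INR k)) => //; rewrite /Rdiv Rmult_assoc Rinv_l; lra.
split; nra.
Qed.


Definition rp (p q y : R) : R := Rmax p (Rmin y q) - p.
Definition tn (p q y : R) : R := Rmin (rp p q y) (q - p - rp p q y).
Definition GG (h r : R) : R := r ^ 2 / 2 - (Rmax 0 (r - h / 2)) ^ 2.
Definition Fq (p q y : R) : R := GG (q - p) (rp p q y).

Ltac brute := cbv [Rmax Rmin Rabs];
  repeat match goal with
  | |- context [Rle_dec ?a ?b] => destruct (Rle_dec a b)
  | |- context [Rcase_abs ?a] => destruct (Rcase_abs a)
  | _ : context [Rle_dec ?a ?b] |- _ => destruct (Rle_dec a b)
  | _ : context [Rcase_abs ?a] |- _ => destruct (Rcase_abs a)
  end.

Lemma rp_bounds p q y : p <= q -> 0 <= rp p q y <= q - p.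
Proof. move=> H; rewrite /rp; brute; split; lra. Qed.

Lemma rp_mono p q y z : p <= q -> y <= z -> rp p q y <= rp p q z /\ rp p q z - rp p q y <= z - y.
Proof. move=> H Hyz; rewrite /rp; brute; split; lra. Qed.

Lemma tn_lip p q y z : p <= q -> Rabs (tn p q y - tn p q z) <= Rabs (rp p q y - rp p q z).
Proof.
move=> H; rewrite /tn; have := rp_bounds y H; have := rp_bounds z H.
move: (rp p q y) (rp p q z) => r s Hs Hr; brute; lra.
Qed.

Lemma tn_ge0 p q y : p <= q -> 0 <= tn p q y.
Proof. move=> H; rewrite /tn; have := rp_bounds y H; move: (rp p q y) => r Hr; brute; lra. Qed.

Lemma tn_nz p q y : p <= q -> tn p q y <> 0 -> p < y < q.
Proof. move=> H; rewrite /tn /rp; brute; lra. Qed.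

Lemma tn_le_rp p q y : p <= q -> tn p q y <= rp p q y.
Proof. move=> H; rewrite /tn; apply Rmin_l. Qed.

Lemma GG_bound h r s : 0 <= r <= h -> 0 <= s <= h -> r <= s ->
  Rabs (GG h s - GG h r) <= Rabs (s - r) * (Rmin r (h - r) + Rmin s (h - s) + Rabs (s - r)).
Proof.
move=> Hr Hs Hrs; rewrite /GG; brute; nra.
Qed.

Lemma GG_bound' h r s : 0 <= r <= h -> 0 <= s <= h ->
  Rabs (GG h s - GG h r) <= Rabs (s - r) * (Rmin r (h - r) + Rmin s (h - s) + Rabs (s - r)).
Proof.
move=> Hr Hs; case: (Rle_dec r s) => H; first exact: GG_bound.
rewrite Rabs_minus_sym (Rabs_minus_sym s r).
have -> : Rmin r (h - r) + Rmin s (h - s) = Rmin s (h - s) + Rmin r (h - r) by ring.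
apply: GG_bound => //; lra.
Qed.

Lemma Fq_bound p q y z : p <= q ->
  Rabs (Fq p q z - Fq p q y) <=
  Rabs (rp p q z - rp p q y) * (tn p q y + tn p q z + Rabs (rp p q z - rp p q y)).
Proof.
move=> H; rewrite /Fq /tn.
have := GG_bound' (rp_bounds y H) (rp_bounds z H).
lra.
Qed.

Lemma GG_ge0 h r : 0 <= r <= h -> 0 <= GG h r.
Proof. move=> Hr; rewrite /GG; brute; nra. Qed.

Lemma GG_mono h r s : 0 <= r <= h -> 0 <= s <= h -> r <= s -> GG h r <= GG h s.
Proof. move=> Hr Hs Hrs; rewrite /GG; brute; nra. Qed.

Lemma Fq_ge0 p q y : p <= q -> 0 <= Fq p q y.
Proof. move=> H; apply: GG_ge0; exact: rp_bounds. Qed.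

Lemma Fq_mono p q y z : p <= q -> y <= z -> Fq p q y <= Fq p q z.
Proof.
move=> H Hyz; apply: GG_mono; try exact: rp_bounds.
by case: (rp_mono H Hyz).
Qed.

Lemma Fq_full p q y : p <= q -> q <= y -> Fq p q y = (q - p) ^ 2 / 4.
Proof.
move=> H Hy; rewrite /Fq /GG.
have -> : rp p q y = q - p by rewrite /rp; brute; lra.
brute; first [field | nra | (exfalso; lra)].
Qed.

Lemma Fq_low p q y : p <= q -> y <= p -> Fq p q y = 0.
Proof.
move=> H Hy; rewrite /Fq /GG.
have -> : rp p q y = 0 by rewrite /rp; brute; lra.
brute; first [field | nra | (exfalso; lra)].
Qed.


Definition crp L k j y := rp (pt L k j) (pt L k j.+1) y.
Definition ct L k j y := tn (pt L k j) (pt L k j.+1) y.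
Definition cF L k j y := Fq (pt L k j) (pt L k j.+1) y.

Lemma nsum_sub (m n : nat) (F G : nat -> R) :
  \big[Rplus/0]_(m <= j < n) F j - \big[Rplus/0]_(m <= j < n) G j =
  \big[Rplus/0]_(m <= j < n) (F j - G j).
Proof.
have : \big[Rplus/0]_(m <= j < n) F j = \big[Rplus/0]_(m <= j < n) (F j - G j) + \big[Rplus/0]_(m <= j < n) G j.
  rewrite -bigR_add; apply: eq_bigr => j _; ring.
lra.
Qed.

Lemma pt_le_S L k j : 0 < L -> (0 < k)%N -> pt L k j <= pt L k j.+1.
Proof. move=> HL Hk; apply: pt_mono => //. Qed.

Lemma tele L k n y : 0 < L -> (0 < k)%N ->
  \big[Rplus/0]_(0 <= j < n) crp L k j y = Rmax (pt L k 0) (Rmin y (pt L k n)) - pt L k 0.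
Proof.
move=> HL Hk; elim: n => [|n IH].
- rewrite big_geq //; brute; lra.
- rewrite big_nat_recr //= IH /crp /rp.
  have := pt_le_S n HL Hk; have : pt L k 0 <= pt L k n by apply: pt_mono.
  move: (pt L k 0) (pt L k n) (pt L k n.+1) => a b c H1 H2.
  brute; lra.
Qed.

Lemma sum_o L k n y z : 0 < L -> (0 < k)%N ->
  \big[Rplus/0]_(0 <= j < n) Rabs (crp L k j z - crp L k j y) <= Rabs (z - y).
Proof.
move=> HL Hk.
wlog Hyz : y z / y <= z.
  move=> Hw; case: (Rle_dec y z) => H; first exact: Hw.
  rewrite Rabs_minus_sym; under eq_bigr => j _ do rewrite Rabs_minus_sym.
  apply: Hw; lra.
have E : forall j, Rabs (crp L k j z - crp L k j y) = crp L k j z - crp L k j y.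
  move=> j; apply: Rabs_right; have := rp_mono (pt_le_S j HL Hk) Hyz; rewrite /crp; lra.
under eq_bigr => j _ do rewrite E.
rewrite -nsum_sub !tele //.
move: (pt L k 0) (pt L k n) => a b; brute; lra.
Qed.

Lemma o_le L k j y z : 0 < L -> (0 < k)%N ->
  Rabs (crp L k j z - crp L k j y) <= Rabs (z - y).
Proof.
move=> HL Hk; have Hp := pt_le_S j HL Hk.
case: (Rle_dec y z) => H.
- have := rp_mono Hp H; rewrite /crp; brute; lra.
- have H' : z <= y by lra.
  have := rp_mono Hp H'; rewrite /crp; brute; lra.
Qed.

Lemma sq_aux a o d : Rabs a <= Rabs o -> Rabs o <= Rabs d -> a ^ 2 <= Rabs d * Rabs o.
Proof. move=> H1 H2; rewrite -pow2_abs; have := Rabs_pos a; nra. Qed.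

Lemma sum_tent_sq L k n y z : 0 < L -> (0 < k)%N ->
  \big[Rplus/0]_(0 <= j < n) (ct L k j y - ct L k j z) ^ 2 <= (y - z) ^ 2.
Proof.
move=> HL Hk.
apply: Rle_trans (_ : \big[Rplus/0]_(0 <= j < n) (Rabs (z - y) * Rabs (crp L k j z - crp L k j y)) <= _).
- apply: bigR_le => j _.
  have H1 := tn_lip y z (pt_le_S j HL Hk).
  have H2 := o_le j y z HL Hk.
  rewrite /ct; apply: sq_aux => //.
  rewrite /crp (Rabs_minus_sym (rp _ _ z)); exact: H1.
- rewrite -bigR_scal.
  have := sum_o n y z HL Hk; have := Rabs_pos (z - y).
  have -> : (y - z) ^ 2 = Rabs (z - y) * Rabs (z - y).
    rewrite -pow2_abs Rabs_minus_sym /=; ring.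
  move=> H1 H2; apply: Rmult_le_compat_l => //.
Qed.


Definition psi L k n (good : nat -> bool) y :=
  \big[Rplus/0]_(0 <= j < n) (if good j then 0 else cF L k j y).

Lemma amgm o a b lam : 0 < lam -> 0 <= o ->
  o * (a + b + o) <= (1 + lam / 2) * o ^ 2 + / lam * (a ^ 2 + b ^ 2).
Proof.
move=> Hl Ho; set t := / lam.
have Ht : lam * t = 1 by rewrite /t Rinv_r; lra.
have Htp : 0 < t by apply: Rinv_0_lt_compat.
have H1 : 2 * lam * o * (a + b) <= lam ^ 2 * o ^ 2 + 2 * (a ^ 2 + b ^ 2).
  have := pow2_ge_0 (lam * o - (a + b)); have := pow2_ge_0 (a - b); nra.
have H2 : t * (2 * lam * o * (a + b)) <= t * (lam ^ 2 * o ^ 2 + 2 * (a ^ 2 + b ^ 2)).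
  by apply: Rmult_le_compat_l; lra.
have E1 : t * (2 * lam * o * (a + b)) = 2 * (o * (a + b)).
  have -> : t * (2 * lam * o * (a + b)) = 2 * (lam * t) * (o * (a + b)) by ring.
  rewrite Ht; ring.
have E2 : t * (lam ^ 2 * o ^ 2 + 2 * (a ^ 2 + b ^ 2)) = lam * o ^ 2 + 2 * t * (a ^ 2 + b ^ 2).
  have -> : t * (lam ^ 2 * o ^ 2 + 2 * (a ^ 2 + b ^ 2)) = (lam * t) * (lam * o ^ 2) + 2 * t * (a ^ 2 + b ^ 2) by ring.
  rewrite Ht; ring.
nra.
Qed.

Lemma psi_pair L k n good lam y z : 0 < L -> (0 < k)%N -> 0 < lam ->
  Rabs (psi L k n good z - psi L k n good y) <=
  (1 + lam / 2) * (z - y) ^ 2 +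
  / lam * \big[Rplus/0]_(0 <= j < n) (if good j then 0 else ct L k j y ^ 2 + ct L k j z ^ 2).
Proof.
move=> HL Hk Hl; rewrite /psi nsum_sub.
apply: Rle_trans; first exact: bigR_abs.
apply: Rle_trans (_ : \big[Rplus/0]_(0 <= j < n)
   ((1 + lam / 2) * (Rabs (z - y) * Rabs (crp L k j z - crp L k j y))
    + / lam * (if good j then 0 else ct L k j y ^ 2 + ct L k j z ^ 2)) <= _).
- apply: bigR_le => j _.
  have Ho := o_le j y z HL Hk.
  have Ho2 : Rabs (crp L k j z - crp L k j y) ^ 2 <= Rabs (z - y) * Rabs (crp L k j z - crp L k j y).
    apply: sq_aux => //; rewrite Rabs_Rabsolu; lra.
  have Hlp : 0 <= 1 + lam / 2 by lra.
  have Hil : 0 < / lam by apply: Rinv_0_lt_compat.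
  case: (good j).
  + rewrite Rminus_0_r Rabs_R0.
    have := Rabs_pos (z - y); have := Rabs_pos (crp L k j z - crp L k j y); nra.
  + have Hb := Fq_bound y z (pt_le_S j HL Hk).
    rewrite /cF /ct /crp in Ho Ho2 Hb *.
    apply: Rle_trans; first exact: Hb.
    apply: Rle_trans; first (apply: amgm; [exact Hl | apply: Rabs_pos]).
    apply: Rplus_le_compat_r; apply: Rmult_le_compat_l => //.
- rewrite bigR_add; apply: Rplus_le_compat; last by rewrite bigR_scal; apply: Rle_refl.
  apply: Rle_trans (_ : (1 + lam / 2) * \big[Rplus/0]_(0 <= j < n)
     (Rabs (z - y) * Rabs (crp L k j z - crp L k j y)) <= _).
    by rewrite bigR_scal; apply: Rle_refl.
  apply: Rmult_le_compat_l; first lra.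
  apply: Rle_trans (_ : Rabs (z - y) * \big[Rplus/0]_(0 <= j < n)
     (Rabs (crp L k j z - crp L k j y)) <= _).
    by rewrite bigR_scal; apply: Rle_refl.
  have := sum_o n y z HL Hk; have := Rabs_pos (z - y).
  have -> : (z - y) ^ 2 = Rabs (z - y) * Rabs (z - y) by rewrite -pow2_abs /=; ring.
  move=> H1 H2; apply: Rmult_le_compat_l => //.
Qed.


Lemma sum_const (m t : nat) c : \big[Rplus/0]_(m <= i < m + t) c = INR t * c.
Proof.
elim: t => [|t IH]; first by rewrite addn0 big_geq //=; lra.
rewrite addnS big_nat_recr ?leq_addr // IH S_INR /=; ring.
Qed.

Lemma count_sum (good : nat -> bool) n :
  \big[Rplus/0]_(0 <= j < n) (if good j then 1 else 0) = INR (count good (iota 0 n)).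
Proof.
elim: n => [|n IH]; first by rewrite big_geq //=.
rewrite big_nat_recr // IH -addn1 iotaD count_cat /= addn0 plus_INR add0n.
by case: (good n).
Qed.

Lemma bigR_le_nat m n (F G : nat -> R) :
  (forall i, (m <= i)%N -> (i < n)%N -> F i <= G i) ->
  \big[Rplus/0]_(m <= i < n) F i <= \big[Rplus/0]_(m <= i < n) G i.
Proof.
elim: n => [|n IH] H; first by rewrite !big_geq //; lra.
case: (leqP m n) => Hmn.
- rewrite !big_nat_recr //; apply: Rplus_le_compat.
  + apply: IH => i H1 H2; apply: H => //; exact: ltnW.
  + exact: H.
- rewrite !big_geq //; lra.
Qed.

Lemma bigR_ge0_nat m n (F : nat -> R) :
  (forall i, 0 <= F i) -> 0 <= \big[Rplus/0]_(m <= i < n) F i.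
Proof. move=> H; apply: bigR_ge0 => i _; exact: H. Qed.

Lemma find_cell L k n x : 0 < L -> (0 < k)%N -> pt L k 0 < x -> x <= pt L k n ->
  exists j, (j < n)%N /\ pt L k j <= x <= pt L k j.+1.
Proof.
move=> HL Hk H0; elim: n => [|n IH] Hn; first lra.
case: (Rle_dec x (pt L k n)) => H.
- case: (IH H) => j [Hj Hx]; exists j; split => //; exact: ltnW.
- exists n; split => //; lra.
Qed.

Lemma cF_nonneg L k j y : 0 < L -> (0 < k)%N -> 0 <= cF L k j y.
Proof. move=> HL Hk; apply: Fq_ge0; exact: pt_le_S. Qed.

Lemma psi_lower L k n good x : 0 < L -> (0 < k)%N ->
  (count good (iota 0 n) < k)%N -> 4 * L < x -> x <= pt L k n ->
  x ^ 2 / (256 * INR k) <= psi L k n good x.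
Proof.
move=> HL Hk Hcount Hx Hxn.
have Hk' : 0 < INR k by apply: lt_0_INR; apply/ltP.
have [j [Hjn Hj]] : exists j, (j < n)%N /\ pt L k j <= x <= pt L k j.+1.
  apply: find_cell => //; rewrite pt_0; lra.
set m := (j %/ k)%N.
have Hm2 : (2 <= m)%N.
  case: (leqP 2 m) => // Hlt; exfalso.
  have Hj2 : (j.+1 <= 2 * k)%N.
    have := Hlt; rewrite /m ltn_divLR // => H; lia.
  have := pt_mono HL Hk Hj2.
  have E2 : pt L k (2 * k) = 4 * L.
    have := @pt_formula L k 2 0 HL Hk (leq0n k); rewrite addn0 => ->; simpl; field; lra.
  rewrite E2; lra.
have [m' Hm'] : exists m', m = m'.+2 by exists (m - 2)%N; lia.
have HmK : (m * k <= j)%N by rewrite /m; exact: leq_trunc_div.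
have HjK : (j.+1 <= m.+1 * k)%N.
  have : (j < m.+1 * k)%N by rewrite -ltn_divLR // /m.
  by [].
set lo := (m' * k)%N.
set hi := (m * k)%N.
have Hhi : hi = (lo + 2 * k)%N by rewrite /hi /lo Hm' !mulSn; lia.
have Hxub : x <= 8 * (L * 2 ^ m').
  have := pt_mono HL Hk HjK.
  have -> : (m.+1 * k = m.+1 * k + 0)%N by rewrite addn0.
  rewrite pt_formula // Hm' /=; nra.
set c := x ^ 2 / (256 * INR k ^ 2).
have Hc : 0 <= c by rewrite /c; apply: Rmult_le_pos; [nra|apply: Rlt_le; apply: Rinv_0_lt_compat; nra].
have Hcell : forall i, (lo <= i)%N -> (i < hi)%N -> c <= cF L k i x.
  move=> i H1 H2.
  have Hi1 : pt L k i.+1 <= x.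
    apply: (Rle_trans _ (pt L k j)); last lra.
    apply: pt_mono => //; exact: leq_trans H2 HmK.
  rewrite /cF Fq_full //; last exact: pt_le_S.
  rewrite pt_S.
  have -> : pt L k i + hw L k i - pt L k i = hw L k i by ring.
  have Hdiv : (m' <= i %/ k)%N.
    have := leq_div2r k H1; rewrite /lo mulnK //.
  have Hpow : 2 ^ m' <= 2 ^ (i %/ k)%N by apply: Rle_pow; [lra|apply/leP].
  have Hhw : x / (8 * INR k) <= hw L k i.
    rewrite /hw; apply (Rmult_le_reg_r (8 * INR k)); first lra.
    field_simplify; try lra. nra.
  have Hxp : 0 < x / (8 * INR k) by apply: Rdiv_lt_0_compat; lra.
  rewrite /c.
  have -> : x ^ 2 / (256 * INR k ^ 2) = (x / (8 * INR k)) ^ 2 / 4 by field; lra.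
  have : (x / (8 * INR k)) ^ 2 <= hw L k i ^ 2 by apply: pow_incr; lra.
  lra.
have Hlo : (lo <= hi)%N by rewrite Hhi; apply: leq_addr.
have Hhin : (hi <= n)%N by apply: leq_trans HmK _; apply: ltnW.
rewrite /psi (big_cat_nat (leq0n lo) (leq_trans Hlo Hhin)) /=.
rewrite (big_cat_nat Hlo Hhin) /=.
have P1 : 0 <= \big[Rplus/0]_(0 <= i < lo) (if good i then 0 else cF L k i x).
  apply: bigR_ge0_nat => i; case: (good i); [lra|exact: cF_nonneg].
have P3 : 0 <= \big[Rplus/0]_(hi <= i < n) (if good i then 0 else cF L k i x).
  apply: bigR_ge0_nat => i; case: (good i); [lra|exact: cF_nonneg].
have P2 : c * \big[Rplus/0]_(lo <= i < hi) (1 - (if good i then 1 else 0))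
    <= \big[Rplus/0]_(lo <= i < hi) (if good i then 0 else cF L k i x).
  rewrite bigR_scal; apply: bigR_le_nat => i H1 H2.
  case: (good i); first lra.
  have := Hcell i H1 H2; lra.
have Hcnt : \big[Rplus/0]_(lo <= i < hi) (if good i then 1 else 0) <= INR (count good (iota 0 n)).
  rewrite -count_sum (big_cat_nat (leq0n lo) (leq_trans Hlo Hhin)) /=.
  rewrite (big_cat_nat Hlo Hhin) /=.
  have : 0 <= \big[Rplus/0]_(0 <= i < lo) (if good i then 1 else 0)
    by apply: bigR_ge0_nat => i; case: (good i); lra.
  have : 0 <= \big[Rplus/0]_(hi <= i < n) (if good i then 1 else 0)
    by apply: bigR_ge0_nat => i; case: (good i); lra.
  lra.
have Hcnt2 : INR (count good (iota 0 n)) <= INR k by apply: le_INR; apply/leP; exact: ltnW.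
have E : \big[Rplus/0]_(lo <= i < hi) (1 - (if good i then 1 else 0)) =
   2 * INR k - \big[Rplus/0]_(lo <= i < hi) (if good i then 1 else 0).
  rewrite -nsum_sub Hhi sum_const mult_INR /=; ring.
rewrite E in P2.
have : c * INR k <= c * (2 * INR k - \big[Rplus/0]_(lo <= i < hi) (if good i then 1 else 0)).
  apply: Rmult_le_compat_l => //; lra.
have -> : c * INR k = x ^ 2 / (256 * INR k) by rewrite /c; field; lra.
lra.
Qed.


Lemma pair_sum (V : finType) (w : V -> V -> R) (g : V -> R) :
  weighted_graph w ->
  sumR predT (fun u => sumR predT (fun v => w u v * (g v + g u))) =
  2 * sumR predT (fun v => deg w v * g v).
Proof.
move=> [Hs _].
have E1 : sumR predT (fun u => sumR predT (fun v => w u v * (g v + g u))) =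
  sumR predT (fun u => sumR predT (fun v => w u v * g v)) +
  sumR predT (fun u => sumR predT (fun v => w u v * g u)).
  rewrite -sumR_add; apply: sumR_ext => u; rewrite -sumR_add; apply: sumR_ext => v; ring.
have E2 : sumR predT (fun u => sumR predT (fun v => w u v * g v)) =
  sumR predT (fun v => deg w v * g v).
  rewrite /sumR bigR_exch; apply: eq_bigr => v _.
  rewrite /deg /sumR Rmult_comm bigR_scal; apply: eq_bigr => u _; ring.
have E3 : sumR predT (fun u => sumR predT (fun v => w u v * g u)) =
  sumR predT (fun v => deg w v * g v).
  apply: sumR_ext => u.
  rewrite /deg Rmult_comm sumR_scal; apply: sumR_ext => v; rewrite (Hs v u); ring.
rewrite E1 E2 E3; ring.
Qed.

Lemma sum_E_le (V : finType) (w : V -> V -> R) (f : V -> R) L k n :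
  weighted_graph w -> 0 < L -> (0 < k)%N ->
  \big[Rplus/0]_(0 <= j < n) edge_energy w (fun v => ct L k j (f v)) <= edge_energy w f.
Proof.
move=> [_ [Hp _]] HL Hk.
rewrite /edge_energy -bigR_scal; apply: Rmult_le_compat_l; first lra.
rewrite /sumR exchange_big /=.
apply: bigR_le => u _; rewrite exchange_big /=; apply: bigR_le => v _.
rewrite -bigR_scal; apply: Rmult_le_compat_l; first exact: Hp.
exact: sum_tent_sq.
Qed.

Lemma numer (V : finType) (w : V -> V -> R) (f : V -> R) L k n good lam :
  weighted_graph w -> 0 < L -> (0 < k)%N -> 0 < lam ->
  sumR predT (fun u => sumR predT (fun v =>
     w u v * Rabs (psi L k n good (f u) - psi L k n good (f v))))
  <= (2 + lam) * edge_energy w f +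
     2 / lam * \big[Rplus/0]_(0 <= j < n)
        (if good j then 0 else normw2 w (fun v => ct L k j (f v))).
Proof.
move=> Hw HL Hk Hl.
have Hp : forall u v, 0 <= w u v by case: Hw => _ [].
set X := fun j u v => if good j then 0 else w u v * (ct L k j (f v) ^ 2 + ct L k j (f u) ^ 2).
set G := fun u v => (1 + lam / 2) * (w u v * (f u - f v) ^ 2) +
   / lam * \big[Rplus/0]_(0 <= j < n) X j u v.
apply: Rle_trans (_ : sumR predT (fun u => sumR predT (fun v => G u v)) <= _).
  apply: sumR_le => u _; apply: sumR_le => v _.
  have := psi_pair n good (f v) (f u) HL Hk Hl.
  move=> H; rewrite /G.
  apply: Rle_trans; first exact: (Rmult_le_compat_l _ _ _ (Hp u v) H).
  rewrite Rmult_plus_distr_l; apply: Rplus_le_compat; first (apply: Req_le; ring).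
  rewrite -Rmult_assoc (Rmult_comm (w u v)) Rmult_assoc bigR_scal.
  apply: Req_le; congr (_ * _); apply: eq_bigr => j _; rewrite /X; case: (good j); ring.
have E1 : sumR predT (fun u => sumR predT (fun v => G u v)) =
  sumR predT (fun u => sumR predT (fun v => (1 + lam / 2) * (w u v * (f u - f v) ^ 2))) +
  / lam * sumR predT (fun u => sumR predT (fun v => \big[Rplus/0]_(0 <= j < n) X j u v)).
  rewrite /G sumR_scal -sumR_add; apply: sumR_ext => u.
  by rewrite sumR_scal -sumR_add.
have E2 : sumR predT (fun u => sumR predT (fun v => (1 + lam / 2) * (w u v * (f u - f v) ^ 2)))
   = (1 + lam / 2) * (2 * edge_energy w f).
  rewrite /edge_energy.
  have -> : 2 * (/ 2 * sumR predT (fun u => sumR predT (fun v => w u v * (f u - f v) ^ 2)))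
     = sumR predT (fun u => sumR predT (fun v => w u v * (f u - f v) ^ 2)) by field.
  rewrite sumR_scal; apply: sumR_ext => u; by rewrite sumR_scal.
have E3 : sumR predT (fun u => sumR predT (fun v => \big[Rplus/0]_(0 <= j < n) X j u v)) =
   \big[Rplus/0]_(0 <= j < n) sumR predT (fun u => sumR predT (fun v => X j u v)).
  rewrite /sumR; under eq_bigr => u _ do rewrite exchange_big.
  by rewrite exchange_big.
have E4 : forall j, sumR predT (fun u => sumR predT (fun v => X j u v)) =
   if good j then 0 else 2 * normw2 w (fun v => ct L k j (f v)).
  move=> j; rewrite /X; case: (good j).
  - rewrite sumR_zero // => u _; by rewrite sumR_zero.
  - rewrite /normw2 -(pair_sum _ Hw); apply: sumR_ext => u; apply: sumR_ext => v; ring.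
rewrite E1 E2 E3.
under eq_bigr => j _ do rewrite E4.
have E5 : \big[Rplus/0]_(0 <= j < n) (if good j then 0 else 2 * normw2 w (fun v => ct L k j (f v)))
   = 2 * \big[Rplus/0]_(0 <= j < n) (if good j then 0 else normw2 w (fun v => ct L k j (f v))).
  rewrite bigR_scal; apply: eq_bigr => j _; case: (good j); ring.
rewrite E5.
apply: Req_le; field; lra.
Qed.


Lemma pow2_ge n : INR n + 1 <= 2 ^ n.
Proof.
elim: n => [|n IH]; first by simpl; lra.
rewrite S_INR /=; have := pos_INR n; nra.
Qed.

Lemma alg (phif R N k : R) : 0 < N -> 0 < k -> 0 < phif -> 0 < R ->
  phif * N / (128 * k) <= 2 * R * N + phif * N / (512 * k) + 1024 * N * phif / (1048576 * k) ->
  phif <= 1048576 * k * R.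
Proof.
move=> HN Hk Hp HR H.
have H2 : (phif * N / (128 * k)) * (1048576 * k / N) <=
   (2 * R * N + phif * N / (512 * k) + 1024 * N * phif / (1048576 * k)) * (1048576 * k / N).
  apply: Rmult_le_compat_r => //; apply: Rlt_le; apply: Rdiv_lt_0_compat; lra.
have E1 : (phif * N / (128 * k)) * (1048576 * k / N) = 8192 * phif by field; lra.
have E2 : (2 * R * N + phif * N / (512 * k) + 1024 * N * phif / (1048576 * k)) * (1048576 * k / N)
   = 2097152 * k * R + 2048 * phif + 1024 * phif by field; lra.
rewrite E1 E2 in H2.
nra.
Qed.

Definition Rltb (x y : R) : bool := if Rlt_dec x y then true else false.
Lemma RltbP x y : Rltb x y = true <-> x < y.
Proof. rewrite /Rltb; case: Rlt_dec => H; split => //. Qed.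

Unset Implicit Arguments.

Theorem mainTheorem9 :
  exists C c1 c2 : R, 0 < C /\ 0 < c1 /\ 0 < c2 /\
  forall (V : finType) (w : V -> V -> R),
    weighted_graph w ->
    (forall v, 1 <= deg w v) ->
  forall (k : nat), (1 <= k)%nat ->
  forall (f : V -> R),
    (forall v, 0 <= f v) ->
    vol w (supp f) <= vol w predT / 2 ->
    0 < rayleigh w f ->
  forall phif : R, is_phi_f w f phif ->
  let delta := phif ^ 2 / rayleigh w f in
    phif <= C * INR k * rayleigh w f
    \/
    exists (F : nat -> V -> R) (a b : nat -> R),
      (forall i j, (i < k)%nat -> (j < k)%nat -> i <> j ->
         forall v, F i v = 0 \/ F j v = 0) /\
      (forall i, (i < k)%nat ->
         (exists v, F i v <> 0) /\
         (forall v, F i v <> 0 -> f v <> 0) /\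
         rayleigh w (F i) <= C * INR k ^ 2 * rayleigh w f / delta /\
         0 < a i /\ a i < b i /\
         c1 * a i / INR k <= b i - a i /\ b i - a i <= c2 * a i / INR k /\
         (forall v, F i v <> 0 -> a i <= f v <= b i)).
Proof.
exists 1048576, (1/2), 1; split; [lra|split; [lra|split; [lra|]]].
move=> V w Hw Hdeg k Hk f Hf0 Hvol HR phif [_ Hphi] delta.
set R := rayleigh w f.
set E := edge_energy w f.
set N := normw2 w f.
have Hk' : 0 < INR k by apply: lt_0_INR; apply/ltP.
have Hdeg0 : forall v, 0 <= deg w v by move=> v; move: (Hdeg v); lra.
have HN0 : 0 <= N by apply: sumR_ge0 => v _; apply: Rmult_le_pos => //; apply: pow2_ge_0.
have HNpos : 0 < N.
  case: (Rle_lt_or_eq_dec _ _ HN0) => // HN; exfalso.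
  move: HR; rewrite /R /rayleigh -/N -HN /Rdiv Rinv_0; lra.
have HRN : R * N = E by rewrite /R /rayleigh -/E -/N; field; lra.
have HE : 0 < E by rewrite -HRN; apply: Rmult_lt_0_compat.
case: (Rle_dec phif 0) => Hphi0.
  left; have : 0 < 1048576 * INR k * R by apply: Rmult_lt_0_compat => //; lra.
  lra.
have Hphip : 0 < phif by lra.
have Hexpos : exists v, supp f v.
  case: (classic (exists v, supp f v)) => // Hn; exfalso.
  have : N = 0.
    apply: sumR_zero => v _.
    have -> : f v = 0.
      case: (Req_EM_T (f v) 0) => // H; exfalso; apply: Hn; exists v; by apply/RneqbP.
    ring.
  lra.
have [vM [_ HM]] : exists v0, predT v0 /\ forall v, predT v -> f v <= f v0.
  case: Hexpos => v0 _; apply: exists_max; by exists v0.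
have [vm [Hvm Hmin]] := exists_min f Hexpos.
set M := f vM.
set mu := f vm.
have Hmu : 0 < mu.
  have := Hf0 vm; have := Hvm; rewrite /supp => /RneqbP; rewrite /mu; lra.
have HMmu : mu <= M by apply: HM.
have [B HB] : exists B : nat, 4 * M / mu < 2 ^ B.
  have [n0 Hn0] := INR_unbounded (4 * M / mu); exists n0; have := pow2_ge n0; lra.
set L := M / 2 ^ B.
have H2B : 0 < 2 ^ B by apply: pow_lt; lra.
have HL : 0 < L by apply: Rdiv_lt_0_compat; lra.
have H4L : 4 * L < mu.
  rewrite /L; apply (Rmult_lt_reg_r (2 ^ B / mu)); first by apply: Rdiv_lt_0_compat.
  have -> : 4 * (M / 2 ^ B) * (2 ^ B / mu) = 4 * M / mu by field; lra.
  have -> : mu * (2 ^ B / mu) = 2 ^ B by field; lra.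
  lra.
have Hkn : (0 < k)%N by [].
set n := (B * k)%N.
have HptN : pt L k n = M.
  have := @pt_formula L k B 0 HL Hkn (leq0n k); rewrite addn0 => ->.
  rewrite /L /=; field; lra.
have Hptpos : forall j, 0 < pt L k j.
  move=> j; have := @pt_mono L k 0 j HL Hkn (leq0n j); rewrite pt_0; lra.
set T := fun j v => ct L k j (f v).
set mj := fun j => normw2 w (T j).
set Ej := fun j => edge_energy w (T j).
set X := 1048576 * INR k ^ 2 * R / delta.
have Hdelta : 0 < delta.
  rewrite /delta -/R; apply: Rdiv_lt_0_compat; [apply: pow_lt; lra | exact HR].
have HX : 0 < X.
  rewrite /X; apply: Rdiv_lt_0_compat => //; apply: Rmult_lt_0_compat => //.
  apply: Rmult_lt_0_compat; [lra|apply: pow_lt => //].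
set good := fun j => Rltb 0 (mj j) && Rleb (Ej j) (X * mj j).
set s := [seq j <- iota 0 n | good j].
have Huniq : uniq s by apply: filter_uniq; apply: iota_uniq.
have Hs : forall j, j \in s -> good j /\ (j < n)%N.
  move=> j; rewrite mem_filter mem_iota => /andP [-> /andP [_ H]]; split => //.
have Hpt_lt : forall j, pt L k j < pt L k j.+1.
  move=> j; rewrite pt_S; have := hw_pos j HL Hkn; lra.
have Hmj0 : forall j, 0 <= mj j.
  move=> j; apply: sumR_ge0 => v _; apply: Rmult_le_pos => //; apply: pow2_ge_0.
have HEj0 : forall j, 0 <= Ej j.
  move=> j; rewrite /Ej /edge_energy; apply: Rmult_le_pos; first lra.
  apply: sumR_ge0 => u _; apply: sumR_ge0 => v _; apply: Rmult_le_pos; last apply: pow2_ge_0.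
  by case: Hw => _ [].
case: (leqP k (size s)) => Hsize.
- right.
  exists (fun i => T (nth 0%N s i)), (fun i => pt L k (nth 0%N s i)),
     (fun i => pt L k (nth 0%N s i).+1).
  split.
  + move=> i i' Hi Hi' Hne v.
    set j := nth 0%N s i; set j' := nth 0%N s i'.
    have Hjj : j <> j'.
      move=> Heq; apply: Hne; apply/eqP; rewrite -(nth_uniq 0%N _ _ Huniq);
        [by apply/eqP|exact: leq_trans Hsize|exact: leq_trans Hsize].
    case: (Req_EM_T (T j v) 0) => H1; first by left.
    case: (Req_EM_T (T j' v) 0) => H2; first by right.
    exfalso.
    have := tn_nz (Rlt_le _ _ (Hpt_lt j)) H1; have := tn_nz (Rlt_le _ _ (Hpt_lt j')) H2.
    case: (ltngtP j j') => Hc; last by [].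
    * have := @pt_mono L k j.+1 j' HL Hkn Hc; lra.
    * have := @pt_mono L k j'.+1 j HL Hkn Hc; lra.
  + move=> i Hi.
    set j := nth 0%N s i.
    have [Hg Hjn] : good j /\ (j < n)%N by apply: Hs; apply: mem_nth; exact: leq_trans Hsize.
    move: Hg => /andP [/RltbP Hm /RlebP HEX].
    have Hpj := Hptpos j; have Hpj1 := Hpt_lt j.
    split; [|split; [|split; [|split; [|split; [|split; [|split]]]]]].
    * case: (classic (exists v, T j v <> 0)) => // Hn; exfalso.
      have : mj j = 0.
        apply: sumR_zero => v _.
        have -> : T j v = 0 by case: (Req_EM_T (T j v) 0) => // H; exfalso; apply: Hn; exists v.
        ring.
      lra.
    * move=> v Hv; have := tn_nz (Rlt_le _ _ Hpj1) Hv; lra.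
    * rewrite -/X /rayleigh -/(Ej j) -/(mj j).
      apply (Rmult_le_reg_r (mj j)) => //; rewrite /Rdiv Rmult_assoc Rinv_l; lra.
    * exact: Hpj.
    * exact: Hpj1.
    * have := pt_bounds j HL Hkn; rewrite pt_S /hw.
      move=> [H1 H2].
      apply (Rmult_le_reg_r (INR k)) => //.
      have -> : 1 / 2 * pt L k j / INR k * INR k = pt L k j / 2 by field; lra.
      have -> : (pt L k j + L * 2 ^ (j %/ k)%N / INR k - pt L k j) * INR k = L * 2 ^ (j %/ k)%N
        by field; lra.
      lra.
    * have := pt_bounds j HL Hkn; rewrite pt_S /hw.
      move=> [H1 H2].
      apply (Rmult_le_reg_r (INR k)) => //.
      have -> : 1 * pt L k j / INR k * INR k = pt L k j by field; lra.
      have -> : (pt L k j + L * 2 ^ (j %/ k)%N / INR k - pt L k j) * INR k = L * 2 ^ (j %/ k)%N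
        by field; lra.
      lra.
    * move=> v Hv; have := tn_nz (Rlt_le _ _ Hpj1) Hv; lra.
- left.
  have Hcount : (count good (iota 0 n) < k)%N by rewrite -size_filter.
  set h := fun v => psi L k n good (f v).
  have Hh0 : forall v, 0 <= h v.
    move=> v; apply: bigR_ge0 => j _; case: (good j); [lra|exact: cF_nonneg].
  have Hhmon : forall u v, f u <= f v -> h u <= h v.
    move=> u v Huv; apply: bigR_le => j _; case: (good j); first lra.
    apply: Fq_mono => //; exact: Rlt_le.
  have Hhsupp : forall v, h v <> 0 -> f v <> 0.
    move=> v Hv Hfv; apply: Hv; rewrite /h Hfv.
    apply: big1 => j _; case: (good j) => //.
    apply: Fq_low; [exact: Rlt_le | exact: Rlt_le].
  have Hco := coarea Hw Hdeg Hf0 Hvol Hphi Hh0 Hhmon Hhsupp.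
  set lam := phif / (512 * INR k * R).
  have Hlam : 0 < lam by rewrite /lam; apply: Rdiv_lt_0_compat => //; nra.
  have Hnum := numer f n good Hw HL Hkn Hlam.
  have Hbad : \big[Rplus/0]_(0 <= j < n) (if good j then 0 else normw2 w (fun v => ct L k j (f v)))
      <= E / X.
    apply: Rle_trans (_ : \big[Rplus/0]_(0 <= j < n) (Ej j / X) <= _).
      apply: bigR_le => j _.
      have HEX : 0 <= Ej j / X by apply: Rmult_le_pos => //; apply: Rlt_le; apply: Rinv_0_lt_compat.
      rewrite /good; case Hm: (Rltb 0 (mj j)); case He: (Rleb (Ej j) (X * mj j)) => //=.
      * move: He; rewrite /Rleb; case: Rle_dec => // Hn _.
        have : X * mj j < Ej j by lra.
        move=> H; apply (Rmult_le_reg_l X) => //; rewrite -/(mj j).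
        have -> : X * (Ej j / X) = Ej j by field; lra.
        lra.
      * move: Hm; rewrite /Rltb; case: Rlt_dec => // Hn _.
        have : mj j <= 0 by lra.
        rewrite -/(mj j); lra.
      * move: Hm; rewrite /Rltb; case: Rlt_dec => // Hn _.
        have : mj j <= 0 by lra.
        rewrite -/(mj j); lra.
    have -> : \big[Rplus/0]_(0 <= j < n) (Ej j / X) = / X * \big[Rplus/0]_(0 <= j < n) Ej j.
      rewrite bigR_scal; apply: eq_bigr => j _; rewrite /Rdiv; ring.
    have HS : \big[Rplus/0]_(0 <= j < n) Ej j <= E := @sum_E_le V w f L k n Hw HL Hkn.
    have := Rmult_le_compat_l (/ X) _ _ (Rlt_le _ _ (Rinv_0_lt_compat _ HX)) HS.
    rewrite /Rdiv; lra.
  have Hden : N / (256 * INR k) <= sumR predT (fun v => deg w v * h v).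
    rewrite /N /normw2 /Rdiv Rmult_comm sumR_scal; apply: sumR_le => v _.
    have -> : / (256 * INR k) * (deg w v * f v ^ 2) = deg w v * (f v ^ 2 / (256 * INR k)).
      rewrite /Rdiv; ring.
    apply: Rmult_le_compat_l => //.
    case: (Req_EM_T (f v) 0) => Hfv.
    + rewrite Hfv /=; have := Hh0 v; have : 0 * (0 * 1) / (256 * INR k) = 0 by field; lra.
      lra.
    + have Hfmu : mu <= f v by apply: Hmin; apply/RneqbP.
      apply: psi_lower => //; first lra.
      rewrite HptN; exact: HM.
  have Hmain : phif * N / (128 * INR k) <=
      (2 + lam) * E + 2 / lam * (E / X).
    apply: Rle_trans; last first.
      apply: Rle_trans; last first.
        apply: Rplus_le_compat_l; apply: Rmult_le_compat_l; last exact: Hbad.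
        apply: Rlt_le; apply: Rdiv_lt_0_compat; lra.
      exact: Hnum.
    apply: Rle_trans; last exact: Hco.
    have : 2 * phif * (N / (256 * INR k)) <= 2 * phif * sumR predT (fun v => deg w v * h v).
      apply: Rmult_le_compat_l; [lra|exact Hden].
    have -> : phif * N / (128 * INR k) = 2 * phif * (N / (256 * INR k)) by field; lra.
    lra.
  have Eq1 : (2 + lam) * E = 2 * R * N + phif * N / (512 * INR k).
    rewrite -HRN /lam; field; repeat split; move=> ?; nra.
  have Eq2 : 2 / lam * (E / X) = 1024 * N * phif / (1048576 * INR k).
    rewrite -HRN /lam /X /delta -/R; field; repeat split; move=> ?; nra.
  rewrite Eq1 Eq2 in Hmain.
  exact: alg Hmain.
Qed.
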